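(* Assume $\hat\omega\in\mathbb{P}_\Omega$ and that $\hat\omega$ and $\mathbf K$ are such that, for every $\omega^{(n)}\in\mathbb{P}_\Omega$ (with $\Delta_n\ne0$), the step $\hat\alpha_n$ defined in the context satisfies $\hat\alpha_n\le\omega^{(n)}_{i_n^-}$. Then the vertex-exchange iteration $\omega^{(n+1)}=\omega^{(n)}+\hat\alpha_n\Delta_n$, initialized at any $\omega^{(1)}\in\mathbb{P}_\Omega$, satisfies $$\|\omega^{(n)}-\hat\omega\|_{\mathbf K}^2\le\frac{8\lambda_{\max}(\mathbf K)}{n+3},\qquad n\ge1.$$
   Context: $\mathbf K$ is a real symmetric positive definite $\Omega\times\Omega$ matrix with largest eigenvalue $\lambda_{\max}(\mathbf K)$; $\|u\|_{\mathbf K}^2=u^T\mathbf K u$. $e_i$ is the $i$-th canonical basis vector of $\mathbb{R}^\Omega$ and $\mathbb{P}_\Omega=\{\omega\in\mathbb{R}^\Omega:\omega_i\ge0,\sum_i\omega_i=1\}$. Vertex-exchange step: $i_n^+\in\arg\min_{i=1,\dots,\Omega}e_i^T\mathbf K(\omega^{(n)}-\hat\omega)$, $i_n^-\in\arg\max_{i:\,\omega^{(n)}_i>0}e_i^T\mathbf K(\omega^{(n)}-\hat\omega)$, $\Delta_n=e_{i_n^+}-e_{i_n^-}$, and $\hat\alpha_n=\Delta_n^T\mathbf K(\hat\omega-\omega^{(n)})/\|\Delta_n\|_{\mathbf K}^2$ (if $\Delta_n=0$ the iterate is left unchanged). *)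

(* Defs.v *)
From HB Require Import structures.
From mathcomp Require Import all_boot all_order all_algebra.
Set Implicit Arguments. Unset Strict Implicit. Unset Printing Implicit Defensive.
Import Order.TTheory GRing.Theory Num.Theory.
Local Open Scope ring_scope.

Section Defs.
Variables (R : rcfType) (Om : nat).

Definition Knorm2 (K : 'M[R]_Om) (u : 'cV[R]_Om) : R := (u^T *m K *m u) 0 0.

Definition spd (K : 'M[R]_Om) : Prop :=
  K^T = K /\ forall u : 'cV[R]_Om, u != 0 -> 0 < Knorm2 K u.

Definition is_lambda_max (K : 'M[R]_Om) (lam : R) : Prop :=
  eigenvalue K lam /\ forall a, eigenvalue K a -> a <= lam.

Definition e_ (i : 'I_Om) : 'cV[R]_Om := delta_mx i 0.

Definition in_simplex (w : 'cV[R]_Om) : Prop :=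
  (forall i, 0 <= w i 0) /\ \sum_i w i 0 = 1.

Definition gradc (K : 'M[R]_Om) (what w : 'cV[R]_Om) (i : 'I_Om) : R :=
  ((e_ i)^T *m K *m (w - what)) 0 0.

Definition is_iplus (K : 'M[R]_Om) (what w : 'cV[R]_Om) (ip : 'I_Om) : Prop :=
  forall j, gradc K what w ip <= gradc K what w j.

Definition is_iminus (K : 'M[R]_Om) (what w : 'cV[R]_Om) (im : 'I_Om) : Prop :=
  0 < w im 0 /\ forall j, 0 < w j 0 -> gradc K what w j <= gradc K what w im.

Definition Delta (ip im : 'I_Om) : 'cV[R]_Om := e_ ip - e_ im.

Definition alpha_hat (K : 'M[R]_Om) (what w : 'cV[R]_Om) (ip im : 'I_Om) : R :=
  ((Delta ip im)^T *m K *m (what - w)) 0 0 / Knorm2 K (Delta ip im).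

(* w' is obtained from w by one vertex-exchange step (for some admissible
   choice of the arg min / arg max indices) *)
Definition VE_step (K : 'M[R]_Om) (what : 'cV[R]_Om) (w w' : 'cV[R]_Om) : Prop :=
  exists ip im, [/\ is_iplus K what w ip, is_iminus K what w im &
    w' = if Delta ip im == 0 then w
         else w + alpha_hat K what w ip im *: Delta ip im].

End Defs.

(* Main.v *)
Require Import Defs.
From HB Require Import structures.
From mathcomp Require Import all_boot all_order all_algebra.
From mathcomp Require Import spectral sesquilinear complex.
From mathcomp Require Import ring lra.
Import Order.TTheory GRing.Theory Num.Theory.
Local Open Scope ring_scope.
Set Implicit Arguments. Unset Strict Implicit.
Section S.
Variable R : rcfType.
Local Notation C := (R[i]).
Local Notation f := (real_complex R).
Lemma conjf (x : R) : (f x)^* = f x.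
Proof. apply: conj_Creal. by apply/complex_realP; exists x. Qed.

Lemma rayleigh n (K : 'M[R]_n) lam : K^T = K ->
  (forall a, eigenvalue K a -> a <= lam) ->
  forall u : 'cV[R]_n, (u^T *m K *m u) 0 0 <= lam * (u^T *m u) 0 0.
Proof.
move=> Ksym Kle u.
pose Kc := map_mx f K.
have Kcherm : Kc \is hermsymmx.
  rewrite qualifE /= expr0 scale1r; apply/eqP/matrixP=> i j.
  have Kij : K i j = K j i by rewrite -{1}Ksym mxE.
  by rewrite !mxE conjf Kij.
have Kcn : Kc \is normalmx by apply: hermitian_normalmx.
have dreal := hermitian_spectral_diag_real Kcherm.
have KcE := elimT (@orthomx_spectralP _ _ Kc) Kcn.
move: KcE dreal.
set P := spectralmx Kc; set d := spectral_diag Kc => KcE dreal.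
have Pu : P \is unitarymx := spectral_unitarymx Kc.
have PU : P \in unitmx := spectral_unit Kc.
have iP := invmx_unitary Pu.
have dle : forall j, d 0 j <= f lam.
  move=> j; have /mxOverP /(_ 0 j) /complex_realP [r dr] := dreal.
  rewrite dr lecR; apply: Kle.
  rewrite eigenvalue_root_char -(fmorph_root f) map_char_poly.
  suff : root (char_poly Kc) (d 0 j) by rewrite dr => H; exact: H.
  rewrite -eigenvalue_root_char; apply/eigenvalueP; exists (row j P).
    rewrite {1}KcE !mulmxA -row_mul mulmxV // row1.
    have -> : delta_mx 0 j *m diag_mx d = d 0 j *: (delta_mx 0 j : 'rV[C]_n).
      apply/matrixP=> a b; rewrite mul_mx_diag !mxE.
      case: (b =P j) => [->|/eqP bj]; first by rewrite mulrC.
      by rewrite andbF mulr0 mul0r.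
    by rewrite -scalemxAl -rowE.
  apply/negP=> /eqP r0.
  have : row j (P *m invmx P) = 0 by rewrite row_mul r0 mul0mx.
  rewrite mulmxV // row1 => /matrixP /(_ 0 j); rewrite !mxE !eqxx /=.
  by move/eqP; rewrite oner_eq0.
pose uc := map_mx f u.
pose v := P *m uc.
pose w := map_mx (fun x : C => x^*) (v^T).
have wE : w = uc^T *m invmx P.
  rewrite iP /w /v trmx_mul map_mxM; congr (_ *m _).
  by apply/matrixP=> a b; rewrite !mxE; apply: conjf.
have L : f ((u^T *m K *m u) 0 0) = (w *m diag_mx d *m v) 0 0.
  rewrite wE /v !mulmxA -(mulmxA _ (invmx P)) -(mulmxA _ (invmx P *m _)) -KcE.
  by rewrite map_trmx -!map_mxM [RHS]mxE.
have Rr : f ((u^T *m u) 0 0) = (w *m v) 0 0.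
  by rewrite wE /v mulmxA mulmxKV // map_trmx -!map_mxM [RHS]mxE.
rewrite -lecR rmorphM /= L Rr !mxE mulr_sumr; apply: ler_sum => j _.
rewrite mul_mx_diag !mxE.
set s := \sum_(j0 < n) _.
rewrite mulrAC [_ * (_ * s)]mulrC.
apply: ler_wpM2l; last exact: dle.
by rewrite mulrC mul_conjC_ge0.
Qed.
End S.
Lemma step_scalar (R : rcfType) (c f f' G q a : R) : 0 <= f -> f <= G -> 0 < q -> q <= c ->
  a * q = G -> f' = f - 2 * a * G + a ^+ 2 * q -> c * f' <= c * f - f ^+ 2.
Proof.
move=> f0 fG q0 qc aq ->.
have a0 : 0 <= a.
  rewrite -(pmulr_lge0 _ q0) aq; lra.
have -> : f - 2 * a * G + a ^+ 2 * q = f - a * G by rewrite -aq; ring.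
have caG : G <= c * a by nra.
have : f ^+ 2 <= G * G by nra.
nra.
Qed.

Lemma ind_scalar (R : rcfType) (n c f f' : R) : 1 <= n -> 0 < c -> 0 <= f -> 0 <= f' -> n * f <= c ->
  c * f' <= c * f - f ^+ 2 -> (n + 1) * f' <= c.
Proof.
move=> n1 c0 f0 f'0 nf h.
have fc : f <= c by nra.
have : c * ((n + 1) * f') <= c * c.
  have : 0 <= (c - n * f) * (c - f) + f ^+ 2 by nra.
  nra.
by rewrite ler_pM2l.
Qed.

Lemma fin_scalar (R : rcfType) (n c f : R) : 1 <= n -> 0 < c -> 0 <= f -> n * f <= 2 * c ->
  f <= 8 * c / (n + 3).
Proof.
move=> n1 c0 f0 nf; rewrite ler_pdivlMr; last lra.
nra.
Qed.
Section M.
Variables (R : rcfType) (Om : nat) (K : 'M[R]_Om).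
Hypothesis Ksym : K^T = K.

Lemma trB (x y : 'cV[R]_Om) : (x - y)^T = x^T - y^T.
Proof. by apply/matrixP=> i j; rewrite !mxE. Qed.

Lemma entD (A B : 'M[R]_1) : (A + B) 0 0 = A 0 0 + B 0 0.
Proof. by rewrite mxE. Qed.
Lemma entB (A B : 'M[R]_1) : (A - B) 0 0 = A 0 0 - B 0 0.
Proof. by rewrite !mxE. Qed.
Lemma entZ a (A : 'M[R]_1) : (a *: A) 0 0 = a * A 0 0.
Proof. by rewrite mxE. Qed.

Lemma bil (x y : 'cV[R]_Om) : (x^T *m K *m y) 0 0 = (y^T *m K *m x) 0 0.
Proof.
have -> : y^T *m K *m x = (x^T *m K *m y)^T by rewrite !trmx_mul trmxK Ksym mulmxA.
by rewrite [RHS]mxE.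
Qed.

Lemma Knorm_exp (d D : 'cV[R]_Om) (a : R) :
  Knorm2 K (d + a *: D) = Knorm2 K d + 2 * a * (D^T *m K *m d) 0 0 + a ^+ 2 * Knorm2 K D.
Proof.
rewrite /Knorm2.
have -> : (d + a *: D)^T = d^T + a *: D^T by apply/matrixP=> i j; rewrite !mxE.
rewrite !mulmxDl !mulmxDr -!scalemxAl !scalemxAr.
rewrite !entD -!scalemxAr !entZ.
rewrite (bil d D); ring.
Qed.

Lemma e_row (i : 'I_Om) (M : 'cV[R]_Om) : ((e_ R i)^T *m M) 0 0 = M i 0.
Proof.
have -> : (e_ R i)^T = delta_mx 0 i by apply/matrixP=> a b; rewrite !mxE andbC.
by rewrite -rowE mxE.
Qed.

Lemma gradcE (what w : 'cV[R]_Om) i : gradc K what w i = (K *m (w - what)) i 0.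
Proof. by rewrite /gradc -mulmxA e_row. Qed.

Lemma DeltaK (ip im : 'I_Om) (d : 'cV[R]_Om) :
  ((Delta R ip im)^T *m K *m d) 0 0 = (K *m d) ip 0 - (K *m d) im 0.
Proof. by rewrite /Delta trB !mulmxBl -!mulmxA entB !e_row. Qed.

Lemma e_e (a b : 'I_Om) : ((e_ R a)^T *m e_ R b) 0 0 = (a == b)%:R.
Proof. by rewrite e_row /e_ mxE eqxx andbT. Qed.

Lemma Delta_norm (ip im : 'I_Om) : ip != im -> ((Delta R ip im)^T *m Delta R ip im) 0 0 = 2.
Proof.
move=> ne; rewrite /Delta trB !mulmxBl !mulmxBr !entB !e_e !eqxx (negbTE ne).
rewrite eq_sym (negbTE ne) /=. rewrite ?mulr1n ?mulr0n. ring.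
Qed.

Lemma Delta0 (ip im : 'I_Om) : (Delta R ip im == 0) = (ip == im).
Proof.
apply/idP/idP; last by move/eqP->; rewrite /Delta subrr.
apply: contraLR => ne; apply/negP => /eqP /matrixP /(_ ip 0).
rewrite /Delta !mxE eqxx (negbTE ne) /= subr0 => /eqP; by rewrite oner_eq0.
Qed.

Lemma sum_e (p : 'I_Om) : \sum_k (e_ R p) k 0 = 1.
Proof.
rewrite (bigD1 p) //= big1 ?addr0; first by rewrite mxE !eqxx.
by move=> k /negbTE kp; rewrite mxE kp.
Qed.

Lemma le_sum1 (v : 'cV[R]_Om) j : in_simplex v -> v j 0 <= 1.
Proof.
case=> v0 <-; rewrite (bigD1 j) //= lerDl; exact: sumr_ge0.
Qed.

Lemma f_le_gap (what w : 'cV[R]_Om) ip im :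
  in_simplex what -> in_simplex w -> is_iplus K what w ip -> is_iminus K what w im ->
  Knorm2 K (w - what) <= gradc K what w im - gradc K what w ip.
Proof.
move=> [h0 h1] [w0 w1] hp [_ hm].
rewrite !gradcE /Knorm2 -mulmxA mxE.
set g := K *m (w - what).
have -> : \sum_j (w - what)^T 0 j * g j 0 = \sum_j w j 0 * g j 0 - \sum_j what j 0 * g j 0.
  by rewrite -sumrB; apply: eq_bigr => j _; rewrite !mxE mulrBl.
apply: lerB.
  rewrite -[g im 0]mul1r -w1 mulr_suml; apply: ler_sum => j _.
  have := w0 j; rewrite le0r => /orP [/eqP ->|wj]; first by rewrite !mul0r.
  rewrite ler_pM2l //; have := hm j wj; by rewrite !gradcE.
rewrite -[g ip 0]mul1r -h1 mulr_suml; apply: ler_sum => j _.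
apply: ler_wpM2l => //; have := hp j; by rewrite !gradcE.
Qed.

End M.

Section Step.
Variables (R : rcfType) (Om : nat) (K : 'M[R]_Om) (lam : R) (what : 'cV[R]_Om).
Hypotheses (Kspd : spd K) (Klam : is_lambda_max K lam) (hwhat : in_simplex what).
Hypothesis H : forall (v : 'cV[R]_Om) (ip im : 'I_Om),
      in_simplex v -> is_iplus K what v ip -> is_iminus K what v im ->
      Delta R ip im != 0 -> alpha_hat K what v ip im <= v im 0.

Lemma entN' m n (M : 'M[R]_(m, n)) i j : (- M) i j = - M i j.
Proof. by rewrite mxE. Qed.

Lemma Knorm_ge0 u : 0 <= Knorm2 K u.
Proof.
have [->|u0] := eqVneq u 0; last by apply/ltW; apply: Kspd.2.
by rewrite /Knorm2 mulmx0 mxE.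
Qed.

Lemma Kray u : Knorm2 K u <= lam * (u^T *m u) 0 0.
Proof. apply: rayleigh; [exact: Kspd.1 | exact: Klam.2]. Qed.

Lemma lam_gt0 : 0 < lam.
Proof.
have [/eigenvalueP [v vK v0] _] := Klam.
have vT0 : v^T != 0 by apply: contra v0 => /eqP h; rewrite -(trmxK v) h trmx0.
have := Kspd.2 _ vT0.
rewrite /Knorm2 trmxK vK -scalemxAl entZ => pos.
have s0 : 0 <= (v *m v^T) 0 0.
  rewrite mxE; apply: sumr_ge0 => i _; rewrite mxE -expr2; exact: sqr_ge0.
nra.
Qed.

Lemma step v v' : in_simplex v -> VE_step K what v v' ->
  in_simplex v' /\ 2 * lam * Knorm2 K (v' - what) <=
     2 * lam * Knorm2 K (v - what) - Knorm2 K (v - what) ^+ 2.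
Proof.
move=> hv [ip [im [hp hm ->]]].
have hgap := f_le_gap hwhat hv hp hm.
have f0 := Knorm_ge0 (v - what).
case: ifP => hD.
  have eq : ip = im by apply/eqP; rewrite -(Delta0 R).
  move: hgap; rewrite eq subrr => hle.
  have -> : Knorm2 K (v - what) = 0 by apply/le_anti/andP.
  split => //; lra.
have ne : ip != im by rewrite -(Delta0 R) hD.
have hD' : Delta R ip im != 0 by rewrite hD.
have aleq := H hv hp hm hD'.
move: aleq.
set a := alpha_hat K what v ip im.
set D := Delta R ip im.
set d := v - what.
set G := gradc K what v im - gradc K what v ip.
move=> aleq.
have q0 : 0 < Knorm2 K D by apply: Kspd.2.
have qc : Knorm2 K D <= 2 * lam by have := Kray D; rewrite Delta_norm // mulrC.
have aq : a * Knorm2 K D = G.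
  rewrite /a /alpha_hat divfK ?gt_eqF // DeltaK /G !gradcE.
  have -> : K *m (what - v) = - (K *m (v - what)) by rewrite -mulmxN opprB.
  rewrite !entN'; ring.
have Gge : 0 <= G by rewrite subr_ge0; exact: hp im.
have a0 : 0 <= a.
  have -> : a = G / Knorm2 K D by rewrite -aq mulfK ?gt_eqF.
  exact: divr_ge0 Gge (ltW q0).
have e' : v + a *: D - what = d + a *: D by rewrite /d addrAC.
split.
  split.
    move=> k.
    have Ek : (v + a *: D) k 0 = v k 0 + a * ((k == ip)%:R - (k == im)%:R).
      by rewrite /D /Delta !mxE !eqxx !andbT.
    rewrite Ek; case: (k =P im) => [->|/eqP kim].
      rewrite eq_sym (negbTE ne) /= ?mulr1n ?mulr0n; lra.
    rewrite /= mulr0n subr0; apply: addr_ge0; first exact: hv.1.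
    by apply: mulr_ge0 => //; apply: ler0n.
  rewrite (eq_bigr (fun k => v k 0 + a * ((e_ R ip) k 0 - (e_ R im) k 0))); last first.
    by move=> k _; rewrite /D /Delta !mxE.
  by rewrite big_split /= -mulr_sumr sumrB !sum_e hv.2 subrr mulr0 addr0.
rewrite e' (Knorm_exp Kspd.1) DeltaK.
apply: (step_scalar f0 hgap q0 qc aq).
by rewrite /G !gradcE; ring.
Qed.

Lemma base w1 : in_simplex w1 -> Knorm2 K (w1 - what) <= 2 * lam.
Proof.
move=> hw; apply: (le_trans (Kray _)).
rewrite mulrC; apply: ler_wpM2r; first exact: ltW lam_gt0.
rewrite mxE.
apply: (@le_trans _ _ (\sum_j (w1 j 0 + what j 0))).
  apply: ler_sum => j _; rewrite !mxE.
  have := hw.1 j; have := hwhat.1 j; have := le_sum1 j hw; have := le_sum1 j hwhat.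
  move=> *; nra.
by rewrite big_split /= hw.2 hwhat.2.
Qed.

End Step.

Unset Implicit Arguments.

Theorem lemmaA7 (R : rcfType) (Om : nat) (K : 'M[R]_Om) (lam : R)
    (what : 'cV[R]_Om) (w : nat -> 'cV[R]_Om) :
  spd K -> is_lambda_max K lam -> in_simplex what ->
  (forall (v : 'cV[R]_Om) (ip im : 'I_Om),
      in_simplex v -> is_iplus K what v ip -> is_iminus K what v im ->
      Delta R ip im != 0 -> alpha_hat K what v ip im <= v im 0) ->
  in_simplex (w 1%N) ->
  (forall n : nat, (1 <= n)%N -> VE_step K what (w n) (w n.+1)) ->
  forall n : nat, (1 <= n)%N ->
    Knorm2 K (w n - what) <= 8 * lam / (n%:R + 3).
Proof.
move=> Kspd Klam hwhat H hw1 hstep.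
have c0 := lam_gt0 Kspd Klam.
suff hs : forall n, (1 <= n)%N ->
    in_simplex (w n) /\ n%:R * Knorm2 K (w n - what) <= 2 * lam.
  move=> n n1; have [_ h] := hs n n1.
  apply: fin_scalar => //; [by rewrite ler1n | exact: Knorm_ge0].
elim=> [//|n IH] _.
case: n IH => [_|n IH].
  split => //; rewrite mul1r; exact: base.
have [hs hf] := IH isT.
have [hs' hf'] := step Kspd Klam hwhat H hs (hstep n.+1 isT).
split => //.
rewrite -natr1.
apply: (ind_scalar _ _ _ _ hf hf').
- by rewrite ler1n.
- lra.
- exact: Knorm_ge0.
- exact: Knorm_ge0.
Qed.
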